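(* Let $G=(V,E)$ be a digraph of directed tree-width at most $k$, and let $V_1,V_2$ satisfy $V_1\cup V_2=V$, $V_1\cap V_2=\emptyset$ and $\{(u,v),(v,u):u\in V_1,v\in V_2\}\subseteq E$. Then there is a directed tree-decomposition $(T,\mathcal{X},\mathcal{W})$, $T=(V_T,E_T)$, of $G$ of width at most $k$ such that $V_1\subseteq X_e$ for every $e\in E_T$, or $V_2\subseteq X_e$ for every $e\in E_T$.
   Context: Digraphs are finite, without loops or multiple arcs. An out-tree is a digraph whose underlying graph is a tree, with a root such that all arcs are directed away from it; $u\le v$ means there is a directed path with $\ge0$ arcs from $u$ to $v$. For $Z\subseteq V$, a set $S\subseteq V$ is $Z$-normal if there is no directed walk in $G-Z$ with first and last vertices in $S$ that uses a vertex of $G-(Z\cup S)$. A directed tree-decomposition of $G=(V,E)$ is a triple $(T,\mathcal{X},\mathcal{W})$ with $T=(V_T,E_T)$ an out-tree, $\mathcal{X}=\{X_e:e\in E_T\}$ and $\mathcal{W}=\{W_r:r\in V_T\}$ subsets of $V$, such that $\mathcal{W}$ is a partition of $V$ into nonempty sets and for every $(u,v)\in E_T$ the set $\bigcup\{W_r: r\in V_T, v\le r\}$ is $X_{(u,v)}$-normal. Its width is $\max_{r\in V_T}|W_r\cup\bigcup_{e\sim r}X_e|-1$ ($e\sim r$: $r$ is an end vertex of $e$); the directed tree-width is the minimum width. *)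

(* Defs.v *)
From mathcomp Require Import all_boot.
Set Implicit Arguments. Unset Strict Implicit. Unset Printing Implicit Defensive.

(* A digraph is a finite type V with an arc relation E : rel V
   (a relation excludes multiple arcs; loops are excluded by irreflexive E). *)

Section DTW.

Variable VT : finType.
Variable ET : rel VT.

Definition und_adj : rel VT := fun x y => ET x y || ET y x.

(* a cycle in the underlying (simple) graph: >= 3 distinct vertices *)
Definition und_has_cycle : Prop :=
  exists (x : VT) (p : seq VT),
    [/\ uniq (x :: p), 2 <= size p, path und_adj x p & und_adj (last x p) x].

(* underlying graph is a tree: a simple graph (no antiparallel arcs, no
   loops, so no multiple edges), nonempty, connected and acyclic *)
Definition underlying_tree : Prop :=
  [/\ irreflexive ET,
      (forall x y, ~~ (ET x y && ET y x)),
      #|VT| > 0,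
      (forall x y, connect und_adj x y) &
      ~ und_has_cycle].

(* out-tree: underlying graph a tree, and some root r from which all arcs
   are directed away, i.e. every vertex is reachable from r along arcs *)
Definition out_tree : Prop :=
  underlying_tree /\ exists r : VT, forall v, connect ET r v.

End DTW.

Section Decomp.
Variable V : finType.
Variable E : rel V.

Definition normal (Z S : {set V}) : Prop :=
  ~ exists (x : V) (p : seq V),
      [/\ x \in S, last x p \in S, path E x p,
          all (fun y => y \notin Z) (x :: p) &
          has (fun y => y \notin S) (x :: p)].

Variable VT : finType.
Variable ET : rel VT.
(* X u v is X_(u,v), meaningful for arcs (u,v) of T *)
Variable X : VT -> VT -> {set V}.
Variable W : VT -> {set V}.

Definition is_dir_tree_decomp : Prop :=
  [/\ out_tree ET,
      (forall r, W r != set0),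
      (forall r s, r != s -> [disjoint W r & W s]),
      (forall v : V, exists r, v \in W r) &
      (forall u v, ET u v ->
         normal (X u v) (\bigcup_(r | connect ET v r) W r))].

Definition bag (r : VT) : {set V} :=
  W r :|: (\bigcup_(u | ET u r) X u r) :|: (\bigcup_(w | ET r w) X r w).

Definition dtd_width : nat := (\max_(r : VT) #|bag r|) - 1.

End Decomp.

Definition dtw_at_most (V : finType) (E : rel V) (k : nat) : Prop :=
  exists (VT : finType) (ET : rel VT) (X : VT -> VT -> {set V})
         (W : VT -> {set V}),
    is_dir_tree_decomp E ET X W /\ dtd_width ET X W <= k.

(* Main.v *)
Require Import Defs.
From mathcomp Require Import all_boot.
Set Implicit Arguments. Unset Strict Implicit. Unset Printing Implicit Defensive.


Section TreeFacts.
Variable VT : finType.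
Variable ET : rel VT.
Hypothesis Ht : out_tree ET.

Lemma mem_path_connect x s y : path ET x s -> y \in x :: s -> connect ET y (last x s).
Proof.
elim: s x => [|c s IH] x /=.
  by move=> _; rewrite inE => /eqP ->.
move=> /andP[exc pc]; rewrite inE => /orP[/eqP ->|ys].
  by apply: (connect_trans (connect1 exc)); apply/connectP; exists s.
exact: IH.
Qed.

Lemma T1 a b : ET a b -> connect ET b a -> False.
Proof.
case: Ht => [[Hirr Hanti _ _ Hcyc] _] eab /connectP[p pp lp].
have [q [pq uq lq]] : exists q, [/\ path ET b q, uniq (b :: q) & last b q = a].
  by rewrite lp; case: (shortenP pp) => q pq uq _; exists q.
case/lastP: q pq uq lq => [|q' c] /=.
  by move=> _ _ hb; move: eab; rewrite -hb Hirr.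
rewrite last_rcons => pq uq ec; subst c.
move: pq; rewrite rcons_path => /andP[pq' eqa].
apply: Hcyc; exists a, (b :: q'); split.
- have: uniq (rcons (b :: q') a) by [].
  by rewrite rcons_uniq.
- case: q' pq' eqa {uq} => [|? ?] //= _ eba.
  by move: (Hanti a b); rewrite eab eba.
- rewrite /= /und_adj eab /=.
  by apply: sub_path pq' => x y ->.
- by rewrite /= /und_adj eqa.
Qed.

Lemma T3 p q z : ET p z -> ET q z -> p = q.
Proof.
move=> epz eqz; apply/eqP/negPn/negP => npq.
case: Ht => [[Hirr Hanti _ _ Hcyc] [r Hr]].
have sym : symmetric (und_adj ET) by move=> x y; rewrite /und_adj orbC.
case/connectP: (Hr p) => sp psp lsp.
case/connectP: (Hr q) => sq psq lsq.
set w1 := rev (belast r sp).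
have pw1 : path (und_adj ET) p w1.
  rewrite lsp /w1 rev_path.
  by apply: sub_path psp => x y exy; rewrite /und_adj exy orbT.
have lw1 : last p w1 = r.
  by rewrite /w1 lsp -(last_cons r) -rev_rcons -lastI rev_cons last_rcons.
have pw : path (und_adj ET) p (w1 ++ sq).
  rewrite cat_path pw1 lw1 /=.
  by apply: sub_path psq => x y exy; rewrite /und_adj exy.
have lw : last p (w1 ++ sq) = q by rewrite last_cat lw1.
have nz : z \notin p :: (w1 ++ sq).
  apply/negP => hz.
  have : (z \in r :: sp) || (z \in r :: sq).
    move: hz; rewrite inE mem_cat => /orP[/eqP->|/orP[h|h]].
    - by rewrite lsp mem_last.
    - by rewrite /w1 mem_rev in h; rewrite (mem_belast h).
    - by rewrite [X in _ || X]inE h !orbT.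
  case/orP => h.
  - by apply: (T1 epz); rewrite lsp; apply: mem_path_connect psp h.
  - by apply: (T1 eqz); rewrite lsq; apply: mem_path_connect psq h.
have [w' [pw' uw' sub lw']] : exists w', [/\ path (und_adj ET) p w', uniq (p :: w'), {subset w' <= w1 ++ sq} & last p w' = q].
  by rewrite -lw; case: (shortenP pw) => w' pw' uw' sub; exists w'.
apply: Hcyc; exists z, (p :: w'); split.
- have -> : uniq (z :: p :: w') = (z \notin p :: w') && uniq (p :: w') by [].
  rewrite uw' andbT; apply: contra nz.
  by rewrite !inE => /orP[->//|/sub ->]; rewrite orbT.
- case: w' pw' uw' sub lw' => [|? ?] // _ _ _ /= h.
  by move: npq; rewrite -h eqxx.
- by rewrite /= /und_adj epz orbT pw'.
- by rewrite /= lw' /und_adj eqz.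
Qed.

Lemma Lparent v c b : connect ET v c -> c != v -> ET b c -> connect ET v b.
Proof.
case/connectP => s ps ->; case/lastP: s ps => [|s' c0] /=; first by rewrite eqxx.
rewrite last_rcons rcons_path => /andP[ps' e] _ ebc.
rewrite -(T3 e ebc); apply/connectP; by exists s'.
Qed.

Lemma Lenter u v b w : ET u v -> ~~ connect ET v b -> connect ET b w ->
  connect ET v w -> connect ET b u.
Proof.
move=> euv nvb /connectP[s ps ->] {w}.
elim: s b nvb ps => [|c s IH] b nvb /=; first by move=> _ h; rewrite h in nvb.
move=> /andP[ebc pc] cvl.
case: (boolP (connect ET v c)) => cvc.
  case: (eqVneq c v) => [ecv|ncv].
    by rewrite ecv in ebc; rewrite (T3 ebc euv) connect0.
  by rewrite (Lparent cvc ncv ebc) in nvb.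
by apply: (connect_trans (connect1 ebc)); apply: IH.
Qed.

End TreeFacts.

Section Restrict.
Variable V : finType.
Variable E : rel V.
Variable VT : finType.
Variable ET : rel VT.
Variable X : VT -> VT -> {set V}.
Variable W : VT -> {set V}.
Hypothesis HD : is_dir_tree_decomp E ET X W.
Variable K : pred VT.
Variables m rt : VT.
Hypothesis mK : K m.
Hypothesis rtK : K rt.
Hypothesis Hrt : forall y, K y -> connect ET rt y.
Hypothesis HK : forall x s, K x -> path ET x s -> K (last x s) -> all K s.
Hypothesis H2 : forall w, ~~ K w -> W w \subset bag ET X W m.
Hypothesis H3 : forall a b w, ET a b -> K a -> K b -> ~~ K w ->
  connect ET b m = connect ET b w.

Definition KT : finType := {x : VT | K x}.
Definition ET' : rel KT := fun x y => ET (val x) (val y).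
Definition X' (x y : KT) := X (val x) (val y).
Definition ff w := if K w then w else m.
Lemma ffK w : K (ff w). Proof. by rewrite /ff; case: ifP. Qed.
Definition W' (k : KT) := \bigcup_(w | ff w == val k) W w.

Lemma Lcon (x y : KT) : connect ET' x y = connect ET (val x) (val y).
Proof.
apply/idP/idP.
  case/connectP => s ps ->; apply/connectP; exists (map val s).
    by rewrite path_map.
  by rewrite last_map.
case/connectP => s ps ly.
have := HK (valP x) ps; rewrite -ly => /(_ (valP y)).
elim: s x ps ly => [|c s IH] x /=.
  by move=> _ /val_inj ->.
move=> /andP[exc pc] ly /andP[Kc Ks].
apply: (connect_trans (connect1 (_ : ET' x (Sub c Kc)))); first by [].
by apply: IH => //.
Qed.

Lemma restrict_ok : is_dir_tree_decomp E ET' X' W' /\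
  (forall k, bag ET' X' W' k \subset bag ET X W (val k)).
Proof.
case: HD => [[[Hirr Hanti _ _ Hcyc] _] Hne Hdis Hcov Hnor].
split; last first.
  move=> k; apply/subsetP => x; rewrite /bag !inE => /orP[/orP[h|h]|h].
  - case/bigcupP: h => w /eqP fw xw.
    move: fw; rewrite /ff; case: ifP => Kw fw.
      by rewrite -fw xw.
    by move: (subsetP (H2 (negbT Kw)) x xw); rewrite fw /bag !inE.
  - case/bigcupP: h => u eu xu; apply/orP; left; apply/orP; right.
    by apply/bigcupP; exists (val u).
  - case/bigcupP: h => u eu xu; apply/orP; right.
    by apply/bigcupP; exists (val u).
split.
- split; last by exists (Sub rt rtK) => y; rewrite Lcon SubK; apply: Hrt (valP y).
  split.
  + by move=> x; apply: Hirr.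
  + by move=> x y; apply: Hanti.
  + by apply/card_gt0P; exists (Sub rt rtK).
  + have sym : symmetric (und_adj ET') by move=> x y; rewrite /und_adj orbC.
    have cr : forall y, connect (und_adj ET') (Sub rt rtK) y.
      move=> y; have : connect ET' (Sub rt rtK) y by rewrite Lcon SubK; apply: Hrt (valP y).
      apply: connect_sub => a b eab; apply: connect1; by rewrite /und_adj eab.
    move=> x y; apply: connect_trans (cr y).
    by rewrite (sym_connect_sym sym); apply: cr.
  + rewrite /und_has_cycle; move=> [x [p [up sp pp lp]]]; apply: Hcyc; exists (val x), (map val p); split.
    * by rewrite -map_cons (map_inj_uniq val_inj).
    * by rewrite size_map.
    * by rewrite path_map.
    * by rewrite last_map.
- move=> k; case/set0Pn: (Hne (val k)) => x hx; apply/set0Pn; exists x.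
  by apply/bigcupP; exists (val k) => //; rewrite /ff (valP k).
- move=> k1 k2 nk; rewrite -setI_eq0; apply/eqP/setP => x; rewrite !inE.
  apply/negP => /andP[/bigcupP[w1 /eqP f1 x1] /bigcupP[w2 /eqP f2 x2]].
  case: (eqVneq w1 w2) => [e12|n12].
    have e : k1 = k2 by apply: val_inj; rewrite -f1 -f2 e12.
    by rewrite e eqxx in nk.
  have := Hdis _ _ n12; rewrite -setI_eq0 => /eqP/setP/(_ x).
  by rewrite !inE x1 x2.
- move=> x; case: (Hcov x) => r xr; exists (Sub (ff r) (ffK r)).
  by apply/bigcupP; exists r; rewrite ?SubK.
- move=> a b eab.
  have hf : forall w, connect ET (val b) (ff w) = connect ET (val b) w.
    move=> w; rewrite /ff; case: ifP => // /negbT Kw.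
    exact: H3 eab (valP a) (valP b) Kw.
  suff -> : \bigcup_(k | connect ET' b k) W' k = \bigcup_(r | connect ET (val b) r) W r.
    exact: Hnor.
  apply/setP => x; apply/bigcupP/bigcupP.
  + case=> k ck /bigcupP[w /eqP fw xw]; exists w => //.
    by rewrite -hf fw -Lcon.
  + case=> w cw xw; exists (Sub (ff w) (ffK w)).
      by rewrite Lcon SubK hf.
    by apply/bigcupP; exists w; rewrite ?SubK.
Qed.

End Restrict.

Section Shrink.
Variable V : finType.
Variable E : rel V.
Variable VT : finType.
Variable ET : rel VT.
Variable X : VT -> VT -> {set V}.
Variable W : VT -> {set V}.
Hypothesis HD : is_dir_tree_decomp E ET X W.

Lemma width_mono (VT' : finType) (ET' : rel VT') X' W' (g : VT' -> VT) :
  (forall k, bag ET' X' W' k \subset bag ET X W (g k)) ->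
  dtd_width ET' X' W' <= dtd_width ET X W.
Proof.
move=> Hb; rewrite /dtd_width leq_sub2r //.
apply/bigmax_leqP => k _; apply: leq_trans (subset_leq_card (Hb k)) _.
exact: leq_bigmax.
Qed.

Lemma card_lt (K : pred VT) v : ~~ K v -> #|KT K| < #|VT|.
Proof.
move=> nK; rewrite card_sig -[X in _ < X](cardC K) -{1}(addn0 #|[pred x | K x]|).
rewrite ltn_add2l; apply/card_gt0P; by exists v.
Qed.

Lemma shrink u v : ET u v ->
  let S := \bigcup_(r | connect ET v r) W r in
  (S \subset X u v) || (~: S \subset X u v) ->
  exists (VT' : finType) (ET' : rel VT') (X' : VT' -> VT' -> {set V})
         (W' : VT' -> {set V}),
    [/\ #|VT'| < #|VT|, is_dir_tree_decomp E ET' X' W' &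
        dtd_width ET' X' W' <= dtd_width ET X W].
Proof.
move=> euv S.
have Ht := HD; case: Ht => [Ht Hne Hdis Hcov Hnor].
have [_ [r Hr]] := Ht.
have Xbu : X u v \subset bag ET X W u.
  by apply/subsetP => x xX; rewrite /bag !inE; apply/orP; right; apply/bigcupP; exists v.
have Xbv : X u v \subset bag ET X W v.
  apply/subsetP => x xX; rewrite /bag !inE; apply/orP; left; apply/orP; right.
  by apply/bigcupP; exists u.
case/orP => Hsub.
- pose K := fun w => ~~ connect ET v w.
  have mK : K u by apply/negP => h; apply: (T1 Ht euv h).
  have rtK : K r.
    by apply/negP => h; apply: (T1 Ht euv); apply: connect_trans h (Hr u).
  have HK : forall x s, K x -> path ET x s -> K (last x s) -> all K s.
    move=> x s; elim: s x => [|c s IH] x //= Kx /andP[exc pc] Kl.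
    have Kc : K c.
      apply/negP => h; move/negP: Kl; apply; apply: connect_trans h _.
      by apply/connectP; exists s.
    by rewrite Kc (IH c).
  have H2 : forall w, ~~ K w -> W w \subset bag ET X W u.
    move=> w /negPn cw; apply: subset_trans Xbu.
    apply: subset_trans Hsub; exact: bigcup_sup.
  have H3 : forall a b w, ET a b -> K a -> K b -> ~~ K w ->
      connect ET b u = connect ET b w.
    move=> a b w _ _ Kb /negPn cw; apply/idP/idP => h.
      by apply: connect_trans h (connect_trans (connect1 euv) cw).
    by apply: (Lenter Ht euv _ h cw); exact: Kb.
  have [HD' Hb] := restrict_ok HD mK rtK (fun y _ => Hr y) HK H2 H3.
  exists (KT K); do 3 eexists; split; [ | exact: HD' | exact: width_mono Hb].
  by apply: (@card_lt K v); rewrite /K negbK connect0.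
- pose K := fun w => connect ET v w.
  have mK : K v by apply: connect0.
  have HK : forall x s, K x -> path ET x s -> K (last x s) -> all K s.
    move=> x s; elim: s x => [|c s IH] x //= Kx /andP[exc pc] Kl.
    have Kc : K c by apply: connect_trans Kx (connect1 exc).
    by rewrite Kc (IH c).
  have H2 : forall w, ~~ K w -> W w \subset bag ET X W v.
    move=> w Kw; apply: subset_trans Xbv; apply: subset_trans Hsub.
    apply/subsetP => x xw; rewrite inE; apply/negP => /bigcupP[r' cr' xr'].
    have nw : w != r' by apply: contraNneq Kw => ->.
    have := Hdis _ _ nw; rewrite -setI_eq0 => /eqP/setP/(_ x).
    by rewrite !inE xw xr'.
  have H3 : forall a b w, ET a b -> K a -> K b -> ~~ K w ->
      connect ET b v = connect ET b w.
    move=> a b w eab Ka Kb Kw.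
    have -> : connect ET b w = false.
      by apply/negP => h; move/negP: Kw; apply; apply: connect_trans Kb h.
    apply/negP => h; apply: (T1 Ht eab); exact: connect_trans h Ka.
  have [HD' Hb] := restrict_ok HD mK mK (fun y Ky => Ky) HK H2 H3.
  exists (KT K); do 3 eexists; split; [ | exact: HD' | exact: width_mono Hb].
  apply: (@card_lt K u); apply/negP => h; exact: (T1 Ht euv h).
Qed.

End Shrink.

Section Main.
Variable V : finType.
Variable E : rel V.
Variable k : nat.
Variables V1 V2 : {set V}.
Hypothesis HU : V1 :|: V2 = [set: V].
Hypothesis Hbip : forall u v, u \in V1 -> v \in V2 -> E u v /\ E v u.

Definition Concl := exists (VT : finType) (ET : rel VT) (X : VT -> VT -> {set V})
         (W : VT -> {set V}),
    [/\ is_dir_tree_decomp E ET X W,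
        dtd_width ET X W <= k &
        (forall e1 e2, ET e1 e2 -> V1 \subset X e1 e2) \/
        (forall e1 e2, ET e1 e2 -> V2 \subset X e1 e2)].

Lemma incX (VT : finType) (ET : rel VT) (X : VT -> VT -> {set V}) (W : VT -> {set V}) r c d : ET c d -> (c == r) || (d == r) ->
  X c d \subset bag ET X W r.
Proof.
move=> ecd /orP[/eqP <-|/eqP <-]; apply/subsetP => x xX; rewrite /bag !inE.
  by apply/orP; right; apply/bigcupP; exists d.
by apply/orP; left; apply/orP; right; apply/bigcupP; exists c.
Qed.

Lemma nondeg (Z S : {set V}) : normal E Z S -> ~~ (S \subset Z) -> ~~ (~: S \subset Z) ->
  (V1 \subset Z) || (V2 \subset Z).
Proof.
move=> Hn /subsetPn[x xS xZ] /subsetPn[y yS yZ].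
rewrite inE in yS.
case: (boolP (V1 \subset Z)) => // /subsetPn[b1 b1V b1Z].
case: (boolP (V2 \subset Z)) => // /subsetPn[b2 b2V b2Z].
exfalso; apply: Hn.
have : x \in V1 :|: V2 by rewrite HU inE.
have : y \in V1 :|: V2 by rewrite HU inE.
rewrite !inE => /orP[yV|yV] /orP[xV|xV].
- have [e1 e2] := Hbip xV b2V; have [e3 e4] := Hbip yV b2V.
  exists x, [:: b2; y; b2; x]; split => //=; by rewrite ?e1 ?e2 ?e3 ?e4 ?xZ ?yZ ?b1Z ?b2Z ?yS ?orbT.
- have [e1 e2] := Hbip yV xV.
  exists x, [:: y; x]; split => //=; by rewrite ?e1 ?e2 ?e3 ?e4 ?xZ ?yZ ?b1Z ?b2Z ?yS ?orbT.
- have [e1 e2] := Hbip xV yV.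
  exists x, [:: y; x]; split => //=; by rewrite ?e1 ?e2 ?e3 ?e4 ?xZ ?yZ ?b1Z ?b2Z ?yS ?orbT.
- have [e1 e2] := Hbip b1V xV; have [e3 e4] := Hbip b1V yV.
  exists x, [:: b1; y; b1; x]; split => //=; by rewrite ?e1 ?e2 ?e3 ?e4 ?xZ ?yZ ?b1Z ?b2Z ?yS ?orbT.
Qed.

Lemma main n : forall (VT : finType) (ET : rel VT) X W, #|VT| <= n ->
  is_dir_tree_decomp E ET X W -> dtd_width ET X W <= k -> k.+1 < #|V| -> Concl.
Proof.
elim: n => [|n IH] VT ET X W hn HD hw hV.
  by case: HD => [[[_ _ h _ _] _] _ _ _ _]; move: hn; rewrite leqNgt h.
case: (boolP [exists u, exists v, ET u v &&
   let S := \bigcup_(r | connect ET v r) W r in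
   (S \subset X u v) || (~: S \subset X u v)]).
  case/existsP => u /existsP[v /andP[euv hS]].
  have := @shrink _ _ _ _ _ _ HD u v euv hS.
  move=> [VT' [ET' [X' [W' [hc HD' hw']]]]].
  apply: (IH VT' ET' X' W') => //; last exact: leq_trans hw' hw.
  by rewrite -ltnS; apply: leq_trans hc hn.
move=> hnd.
have HD0 := HD; case: HD0 => [[[_ _ _ Hconn _] _] _ _ _ Hnor].
have Hb : forall r, #|bag ET X W r| <= k.+1.
  move=> r; have h1 := @leq_bigmax _ (fun r => #|bag ET X W r|) r; simpl in h1; apply: (leq_trans h1).
  by move: hw; rewrite /dtd_width leq_subLR add1n.
have dich : forall c d, ET c d -> (V1 \subset X c d) || (V2 \subset X c d).
  move=> c d ecd; apply: nondeg (Hnor _ _ ecd) _ _.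
  - apply/negP => h; move/negP: hnd; apply; apply/existsP; exists c; apply/existsP; exists d.
    by rewrite ecd /= h.
  - apply/negP => h; move/negP: hnd; apply; apply/existsP; exists c; apply/existsP; exists d.
    by rewrite ecd /= h orbT.
have conf : forall r c1 d1 c2 d2, ET c1 d1 -> ET c2 d2 -> (c1 == r) || (d1 == r) ->
    (c2 == r) || (d2 == r) -> V1 \subset X c1 d1 -> V2 \subset X c2 d2 -> False.
  move=> r c1 d1 c2 d2 e1 e2 i1 i2 s1 s2.
  have : [set: V] \subset bag ET X W r.
    rewrite -HU subUset; apply/andP; split.
      by apply: subset_trans s1 (incX _ _ e1 i1).
    by apply: subset_trans s2 (incX _ _ e2 i2).
  move/subset_leq_card; rewrite cardsT => h.
  by move: (leq_trans h (Hb r)); rewrite leqNgt hV.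
exists VT, ET, X, W; split => //.
case: (boolP [forall c, forall d, ET c d ==> (V1 \subset X c d)]).
  move=> /forallP h; left => c d ecd; exact: (implyP (forallP (h c) d) ecd).
rewrite negb_forall => /existsP[a]; rewrite negb_forall => /existsP[b].
rewrite negb_imply => /andP[eab nab].
have v2ab : V2 \subset X a b by move: (dich _ _ eab); rewrite (negbTE nab).
pose N n := forall c d, ET c d -> (c == n) || (d == n) -> V2 \subset X c d.
have mkN : forall n c d, ET c d -> (c == n) || (d == n) -> V2 \subset X c d -> N n.
  move=> n0 c d ecd icd v2 c' d' ecd' icd'.
  case/orP: (dich _ _ ecd') => // v1.
  by exfalso; apply: (conf n0 c' d' c d).
have Na : N a by apply: (mkN a a b eab); rewrite ?eqxx.
right => c d ecd.
suff : N c by apply => //; rewrite eqxx.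
case/connectP: (Hconn a c) => s ps ->.
elim: s a Na ps {eab nab v2ab} => [|c0 s IHs] a0 Na0 //= /andP[hac ps].
apply: (IHs c0) ps.
case/orP: hac => e.
- apply: (mkN c0 a0 c0 e); first by rewrite eqxx orbT.
  by apply: Na0 => //; rewrite eqxx.
- apply: (mkN c0 c0 a0 e); first by rewrite eqxx.
  by apply: Na0 => //; rewrite eqxx orbT.
Qed.
End Main.

Theorem lemma4p9 (V : finType) (E : rel V) (k : nat)
  (V1 V2 : {set V}) :
  irreflexive E ->
  dtw_at_most E k ->
  V1 :|: V2 = [set: V] ->
  V1 :&: V2 = set0 ->
  (forall u v, u \in V1 -> v \in V2 -> E u v /\ E v u) ->
  exists (VT : finType) (ET : rel VT) (X : VT -> VT -> {set V})
         (W : VT -> {set V}),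
    [/\ is_dir_tree_decomp E ET X W,
        dtd_width ET X W <= k &
        (forall e1 e2, ET e1 e2 -> V1 \subset X e1 e2) \/
        (forall e1 e2, ET e1 e2 -> V2 \subset X e1 e2)].
Proof.
move=> _ [VT [ET [X [W [HD hw]]]]] HU _ Hbip.
case: (leqP #|V| k.+1) => hV; last exact: (main HU Hbip (leqnn _) HD hw hV).
have [x0 _] : exists x : V, true.
  case: HD => [[[_ _ h _ _] _] Hne _ _ _].
  case/card_gt0P: h => r _; case/set0Pn: (Hne r) => x _; by exists x.
exists unit, (fun _ _ => false), (fun _ _ => set0), (fun _ => setT); split.
- split.
  + split; last by exists tt => -[]; apply: connect0.
    split => //.
    * by rewrite card_unit.
    * by move=> [] []; apply: connect0.
    * move=> [x [p [up sp _ _]]]; case: p up sp => [|c p]; first by [].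
      by case: x c => [] [].
  + by move=> _; apply/set0Pn; exists x0; rewrite inE.
  + by move=> [] [] /eqP.
  + by move=> v; exists tt; rewrite inE.
  + by [].
- rewrite /dtd_width leq_subLR add1n; apply/bigmax_leqP => r _.
  by apply: leq_trans (subset_leq_card (subsetT _)) _; rewrite cardsT.
- by left.
Qed.
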